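(* Let $A_{dsc}$ be the algorithm for the Demand \& Set-Cover (DSC) problem that runs an $f_{sc}$-factor approximation algorithm $A_{sc}$ for Set-Cover and an $f_{kp}$-factor approximation algorithm $A_{kp}$ for Minimization Knapsack, and returns the union $\mathcal{L}_{sc}\cup\mathcal{L}_{kp}$ of their solutions. Then $A_{dsc}$ returns a feasible solution for DSC whose cost is at most $(f_{sc}+f_{kp})$ times the optimal cost of DSC.
   Context: Let $\mathcal{L}$ be a finite set of candidate sites and $\mathcal{I}$ a set of locations of interest. Each site $i\in\mathcal{L}$ has a cost $c_i\ge 0$, a demand $d_i\ge 0$, and a cover set $S_i^r\subseteq\mathcal{I}$ (locations within reachability radius $r$ of $i$); $D\ge 0$ is a required total demand. The Demand \& Set-Cover (DSC) problem is: minimize $\sum_{i\in\mathcal{L}} c_i x_i$ over $x_i\in\{0,1\}$ subject to $\sum_{i\in\mathcal{L}:\ell\in S_i^r} x_i\ge 1$ for all $\ell\in\mathcal{I}$ and $\sum_{i\in\mathcal{L}} d_i x_i\ge D$. Its two subproblems are Set-Cover (SC): minimize $\sum_i c_i x_i$ subject only to the covering constraints $\sum_{i:\ell\in S_i^r} x_i\ge 1$ for all $\ell\in\mathcal{I}$; and Minimization Knapsack (MinKP): minimize $\sum_i c_i x_i$ subject only to $\sum_i d_i x_i\ge D$. $A_{sc}$ is an $f_{sc}$-factor approximation algorithm for SC returning $\mathcal{L}_{sc}\subseteq\mathcal{L}$, and $A_{kp}$ is an $f_{kp}$-factor approximation algorithm for MinKP returning $\mathcal{L}_{kp}\subseteq\mathcal{L}$.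 The cost of a set of sites is the sum of their costs $c_i$. *)

(* Defs.v *)
From HB Require Import structures.
From mathcomp Require Import all_boot all_order all_algebra.
Set Implicit Arguments. Unset Strict Implicit. Unset Printing Implicit Defensive.
Import Order.TTheory GRing.Theory Num.Theory.
Local Open Scope ring_scope.

Section DSC.
Variables (R : realFieldType) (L I : finType).

(* A solution is a set of chosen sites X (x_i = 1 iff i \in X). *)
Definition cost (c : L -> R) (X : {set L}) : R := \sum_(i in X) c i.

Definition sc_feasible (S : L -> {set I}) (X : {set L}) : Prop :=
  forall l : I, (1 <= \sum_(i in X | l \in S i) 1)%N.

Definition kp_feasible (d : L -> R) (D : R) (X : {set L}) : Prop :=
  D <= \sum_(i in X) d i.

Definition dsc_feasible (d : L -> R) (D : R) (S : L -> {set I}) (X : {set L}) :=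
  sc_feasible S X /\ kp_feasible d D X.

(* A_sc is an f-factor approximation algorithm for Set-Cover: on every
   feasible instance (nonnegative costs) it returns a feasible solution of
   cost at most f times the cost of any feasible solution (i.e. f * OPT). *)
Definition sc_approx (f : R) (A : (L -> R) -> (L -> {set I}) -> {set L}) :=
  forall (c : L -> R) (S : L -> {set I}),
    (forall i, 0 <= c i) -> (exists X, sc_feasible S X) ->
    sc_feasible S (A c S) /\
    forall X, sc_feasible S X -> cost c (A c S) <= f * cost c X.

Definition kp_approx (f : R) (A : (L -> R) -> (L -> R) -> R -> {set L}) :=
  forall (c d : L -> R) (D : R),
    (forall i, 0 <= c i) -> (forall i, 0 <= d i) -> 0 <= D ->
    (exists X, kp_feasible d D X) ->
    kp_feasible d D (A c d D) /\
    forall X, kp_feasible d D X -> cost c (A c d D) <= f * cost c X.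

Definition A_dsc (Asc : (L -> R) -> (L -> {set I}) -> {set L})
  (Akp : (L -> R) -> (L -> R) -> R -> {set L})
  (c d : L -> R) (D : R) (S : L -> {set I}) : {set L} :=
  Asc c S :|: Akp c d D.

End DSC.

(* Main.v *)
Require Import Defs.
From HB Require Import structures.
From mathcomp Require Import all_boot all_order all_algebra.
Import Order.TTheory GRing.Theory Num.Theory.
Local Open Scope ring_scope.

Lemma sum_sub_le (R : realFieldType) (L : finType) (f : L -> R) (A B : {set L}) :
  (forall i, 0 <= f i) -> A \subset B -> \sum_(i in A) f i <= \sum_(i in B) f i.
Proof.
move=> f0 AB.
rewrite [X in _ <= X](bigID (fun i => i \in A)) /=.
have -> : \sum_(i in B | i \in A) f i = \sum_(i in A) f i.
  apply: eq_bigl => i; apply/andP/idP => [[] //|iA]; split => //.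
  exact: (subsetP AB).
rewrite lerDl; apply: sumr_ge0 => i _; exact: f0.
Qed.


Lemma sum_union_le (R : realFieldType) (L : finType) (f : L -> R) (A B : {set L}) :
  (forall i, 0 <= f i) -> \sum_(i in A :|: B) f i <= \sum_(i in A) f i + \sum_(i in B) f i.
Proof.
move=> f0.
rewrite (bigID (fun i => i \in A)) /=; apply: lerD.
  rewrite le_eqVlt; apply/orP; left; apply/eqP; apply: eq_bigl => i.
  by rewrite in_setU; case: (i \in A); rewrite ?andbT ?andbF.
apply: (@le_trans _ _ (\sum_(i in B | i \notin A) f i)).
  rewrite le_eqVlt; apply/orP; left; apply/eqP; apply: eq_bigl => i.
  by rewrite in_setU; case: (i \in A); rewrite ?andbT ?andbF ?orbF.
rewrite [X in _ <= X](bigID (fun i => i \in A)) /= lerDr.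
by apply: sumr_ge0 => i _.
Qed.

Theorem lemma1 (R : realFieldType) (L I : finType) (fsc fkp : R)
  (Asc : (L -> R) -> (L -> {set I}) -> {set L})
  (Akp : (L -> R) -> (L -> R) -> R -> {set L})
  (c d : L -> R) (D : R) (S : L -> {set I}) :
  sc_approx fsc Asc -> kp_approx fkp Akp ->
  (forall i, 0 <= c i) -> (forall i, 0 <= d i) -> 0 <= D ->
  (exists X, dsc_feasible d D S X) ->
  dsc_feasible d D S (A_dsc Asc Akp c d D S) /\
  forall X, dsc_feasible d D S X ->
    cost c (A_dsc Asc Akp c d D S) <= (fsc + fkp) * cost c X.
Proof.
move=> Hsc Hkp c0 d0 D0 [X0 [F1 F2]].
have [Fsc Csc] := Hsc c S c0 (ex_intro _ X0 F1).
have [Fkp Ckp] := Hkp c d D c0 d0 D0 (ex_intro _ X0 F2).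
split.
  split.
    move=> l; apply: leq_trans (Fsc l) _.
    rewrite [X in (_ <= X)%N](bigID (fun i => i \in Asc c S)) /=.
    apply: leq_trans (leq_addr _ _); rewrite leq_eqVlt; apply/orP; left; apply/eqP.
    apply: eq_bigl => i; rewrite /A_dsc in_setU.
    by case: (i \in Asc c S); rewrite ?andbT ?andbF.
  rewrite /kp_feasible; apply: le_trans Fkp _.
  apply: sum_sub_le => //; exact: subsetUr.
move=> X [G1 G2].
rewrite /A_dsc /cost.
have H := @sum_union_le R L c (Asc c S) (Akp c d D) c0.
apply: le_trans H _.
rewrite mulrDl; apply: lerD; [exact: Csc | exact: Ckp].
Qed.
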